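(* Let $V$ be a finite set and let $A$ be a real symmetric matrix indexed by $V$ that has a perfect elimination ordering, and let $v\in V$. Then $v$ is simplicial in $A$ if and only if there exists a perfect elimination ordering of $A$ having $v$ as its first element.
   Context: A perfect elimination ordering of $A$ is a linear order $\pi$ of $V$ with $A_{yz}\ge\min\{A_{xy},A_{xz}\}$ for all $x,y,z\in V$ with $x<_\pi y<_\pi z$. An element $v$ is simplicial in $A$ if $A_{yz}\ge\min\{A_{vy},A_{vz}\}$ for all distinct $y,z\in V\setminus\{v\}$. *)

(* Defs.v *)
From mathcomp Require Import all_boot all_order all_algebra.
From mathcomp Require Import reals.
Set Implicit Arguments. Unset Strict Implicit. Unset Printing Implicit Defensive.
Import Order.TTheory GRing.Theory Num.Theory.
Local Open Scope ring_scope.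

Definition symmetric_mx (R : realType) (V : finType) (A : V -> V -> R) : Prop :=
  forall x y, A x y = A y x.

(* A linear order pi of V is represented by a sequence listing every element
   of V exactly once; x <_pi y iff x occurs before y in the sequence. *)
Definition linear_order (V : finType) (pi : seq V) : Prop :=
  perm_eq pi (enum V).

Definition ltpi (V : finType) (pi : seq V) (x y : V) : bool :=
  (index x pi < index y pi)%N.

Definition is_peo (R : realType) (V : finType) (A : V -> V -> R) (pi : seq V)
  : Prop :=
  linear_order pi /\
  forall x y z : V, ltpi pi x y -> ltpi pi y z ->
    Num.min (A x y) (A x z) <= A y z.

Definition has_peo (R : realType) (V : finType) (A : V -> V -> R) : Prop :=
  exists pi, is_peo A pi.

Definition simplicial (R : realType) (V : finType) (A : V -> V -> R) (v : V)
  : Prop :=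
  forall y z : V, y != v -> z != v -> y != z ->
    Num.min (A v y) (A v z) <= A y z.

(* Main.v *)
Require Import Defs.
From mathcomp Require Import all_boot all_order all_algebra.
From mathcomp Require Import reals.
From mathcomp Require Import zify.
Import Order.TTheory GRing.Theory Num.Theory.
Local Open Scope ring_scope.

Lemma rel_order (T : eqType) (s1 s2 : seq T) v x y :
  x != v -> y != v ->
  (index x (s1 ++ s2) < index y (s1 ++ s2))%N =
  (index x (s1 ++ v :: s2) < index y (s1 ++ v :: s2))%N.
Proof.
move=> xv yv; rewrite !index_cat /= ![v == _]eq_sym (negbTE xv) (negbTE yv).
have hx := index_mem x s1; have hy := index_mem y s1.
case: (x \in s1) hx => hx; case: (y \in s1) hy => hy; lia.
Qed.

Lemma rem_split (T : eqType) (s1 s2 : seq T) v :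
  v \notin s1 -> rem v (s1 ++ v :: s2) = s1 ++ s2.
Proof.
move=> h; rewrite remE index_pivot // take_cat ltnn subnn take0 cats0.
by rewrite drop_cat ltnNge leqnSn /= subSnn /= drop0.
Qed.

Theorem lemma2 (R : realType) (V : finType) (A : V -> V -> R) (v : V) :
  symmetric_mx A -> has_peo A ->
  (simplicial A v <-> exists pi : seq V, is_peo A pi /\ head v pi = v).
Proof.
move=> Asym [sigma [Lsig Psig]]; split.
- move=> Sv.
  have vin : v \in sigma by rewrite (perm_mem Lsig) mem_enum.
  have usig : uniq sigma by rewrite (perm_uniq Lsig) enum_uniq.
  exists (v :: rem v sigma); split => //; split.
    rewrite /linear_order in Lsig *; apply: (perm_trans _ Lsig); rewrite perm_sym; exact: perm_to_rem.
  case/splitPr: vin usig Psig => s1 s2 usig Psig.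
  have vs1 : v \notin s1.
    by move: usig; rewrite cat_uniq /= negb_or => /and3P [_ /andP [] ].
  rewrite rem_split // => x y z.
  rewrite /ltpi /= ![v == _]eq_sym.
  case: eqP => [->|/eqP xv]; case: eqP => [->|/eqP yv] //;
    case: eqP => [->|/eqP zv] //.
  + move=> _ yz; apply: Sv => //; apply/eqP => eyz; by rewrite eyz ltnn in yz.
  + rewrite !ltnS => xy yz; apply: Psig; rewrite /ltpi -?rel_order //.
- move=> [[|a pi] [[Lpi Ppi] /= hd]].
    by have := perm_mem Lpi v; rewrite mem_enum in_nil.
  subst a => y z yv zv yz.
  have mem : forall w, w != v -> w \in pi.
    by move=> w wv; have := perm_mem Lpi w; rewrite mem_enum in_cons (negbTE wv) /= => ->.
  have lv : forall w, w != v -> ltpi (v :: pi) v w.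
    by move=> w wv; rewrite /ltpi /= eqxx eq_sym (negbTE wv).
  have lyz : forall w w', w != v -> w' != v -> (index w pi < index w' pi)%N ->
      ltpi (v :: pi) w w'.
    by move=> w w' wv w'v h; rewrite /ltpi /= !(eq_sym v) (negbTE wv) (negbTE w'v).
  case: (ltngtP (index y pi) (index z pi)) => h.
  + exact: (Ppi _ _ _ (lv _ yv) (lyz _ _ yv zv h)).
  + rewrite minC (Asym y z); exact: (Ppi _ _ _ (lv _ zv) (lyz _ _ zv yv h)).
  + have := nth_index v (mem _ yv); rewrite h nth_index ?mem // => e.
    by rewrite e eqxx in yz.
Qed.
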